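(* For monotone graph classes $\mathcal G_1$ and $\mathcal G_2$, the following are equivalent: (1) $\mathcal G_1\boxtimes\mathcal G_2$ has bounded pathwidth; (2) $\mathcal G_1\square\mathcal G_2$ has bounded pathwidth; (3) both $\mathcal G_1$ and $\mathcal G_2$ have bounded pathwidth, and $\tilde{\mathsf v}(\mathcal G_1)$ or $\tilde{\mathsf v}(\mathcal G_2)$ is bounded.
   Context: A graph class is a set of graphs closed under isomorphism containing a graph with non-empty vertex set; it is monotone if closed under taking subgraphs. For a graph parameter $\beta$ and class $\mathcal G$, $\beta(\mathcal G):=\sup\{\beta(G):G\in\mathcal G\}$, and $\beta(\mathcal G)$ is bounded if this supremum is finite. $\tilde{\mathsf v}(G)$ is the maximum number of vertices of a connected component of $G$. For a product $\bullet$, $\mathcal G_1\bullet\mathcal G_2:=\{G_1\bullet G_2: G_1\in\mathcal G_1, G_2\in\mathcal G_2\}$. The cartesian product $G_1 \square G_2$ has vertex set $V(G_1)\times V(G_2)$, with $(a,v)(b,u)$ an edge iff either $ab\in E(G_1)$ and $u=v$, or $uv\in E(G_2)$ and $a=b$; the strong product $G_1\boxtimes G_2$ has the same vertex set, with distinct vertices $(a,v),(b,u)$ adjacent iff ($a=b$ or $ab\in E(G_1)$) and ($u=v$ or $uv\in E(G_2)$). *)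

(* Defs.v *)
From Stdlib Require Import ClassicalEpsilon.
From mathcomp Require Import all_boot.
Set Implicit Arguments. Unset Strict Implicit. Unset Printing Implicit Defensive.

Record graph := Graph {
  vtx : finType;
  adj : rel vtx;
  adj_sym : symmetric adj;
  adj_irr : irreflexive adj }.
Arguments adj : clear implicits.
Arguments vtx : clear implicits.
Arguments adj_sym : clear implicits.
Arguments adj_irr : clear implicits.

Definition iso (G H : graph) : Prop :=
  exists f : vtx G -> vtx H, bijective f /\ forall x y, adj H (f x) (f y) = adj G x y.

Definition subgraph (H G : graph) : Prop :=
  exists f : vtx H -> vtx G, injective f /\ forall x y, adj H x y -> adj G (f x) (f y).

Definition graph_class (C : graph -> Prop) : Prop :=
  (forall G H, iso G H -> C G -> C H) /\ (exists G, C G /\ 0 < #|vtx G|).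

Definition monotone (C : graph -> Prop) : Prop :=
  graph_class C /\ (forall G H, subgraph H G -> C G -> C H).

Definition path_decomposition (G : graph) (B : seq {set vtx G}) : Prop :=
  (forall v : vtx G, exists2 X, X \in B & v \in X) /\
  (forall u v : vtx G, adj G u v -> exists2 X, X \in B & (u \in X) && (v \in X)) /\
  (forall (v : vtx G) (i j l : nat), i <= j -> j <= l -> l < size B ->
      v \in nth set0 B i -> v \in nth set0 B l -> v \in nth set0 B j).

Definition pw_at_most (G : graph) (k : nat) : Prop :=
  exists B : seq {set vtx G}, @path_decomposition G B /\ forall X, X \in B -> #|X| <= k.+1.

Lemma pw_exists (G : graph) : exists k, pw_at_most G k.
Proof.
exists #|vtx G|; exists [:: setT]; split; last first.
  by move=> X; rewrite inE => /eqP ->; rewrite cardsT; apply: leqW.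
split; first by move=> v; exists setT; rewrite ?inE.
split; first by move=> u v _; exists setT; rewrite ?inE.
by move=> v [|i] [|j] [|l] //=.
Qed.

Definition pw_at_mostb (G : graph) (k : nat) : bool :=
  if excluded_middle_informative (pw_at_most G k) then true else false.

Lemma pw_existsb (G : graph) : exists k, pw_at_mostb G k.
Proof.
have [k Hk] := pw_exists G; exists k; rewrite /pw_at_mostb.
by case: excluded_middle_informative.
Qed.

Definition pathwidth (G : graph) : nat := ex_minn (pw_existsb G).

Definition max_comp (G : graph) : nat :=
  \max_(x : vtx G) #|[set y | connect (adj G) x y]|.

Definition bounded (beta : graph -> nat) (C : graph -> Prop) : Prop :=
  exists b, forall G, C G -> beta G <= b.

Section Products.
Variables G1 G2 : graph.
Definition sadj : rel (vtx G1 * vtx G2) := fun p q =>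
  (p != q) && ((p.1 == q.1) || adj G1 p.1 q.1) && ((p.2 == q.2) || adj G2 p.2 q.2).
Lemma sadj_sym : symmetric sadj.
Proof.
move=> [a v] [b u]; rewrite /sadj /= [(b, u) == _]eq_sym [b == a]eq_sym
  [u == v]eq_sym (adj_sym G1 a b) (adj_sym G2 v u).
by [].
Qed.
Lemma sadj_irr : irreflexive sadj.
Proof. by move=> p; rewrite /sadj eqxx. Qed.
Definition strong := Graph sadj_sym sadj_irr.

Definition cadj : rel (vtx G1 * vtx G2) := fun p q =>
  (adj G1 p.1 q.1 && (p.2 == q.2)) || (adj G2 p.2 q.2 && (p.1 == q.1)).
Lemma cadj_sym : symmetric cadj.
Proof.
move=> [a v] [b u]; rewrite /cadj /= [b == a]eq_sym [u == v]eq_sym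
  (adj_sym G1 a b) (adj_sym G2 v u).
by [].
Qed.
Lemma cadj_irr : irreflexive cadj.
Proof. by move=> [a v]; rewrite /cadj /= !adj_irr. Qed.
Definition cartesian := Graph cadj_sym cadj_irr.
End Products.

Definition class_prod (prod : graph -> graph -> graph) (C1 C2 : graph -> Prop) :
  graph -> Prop :=
  fun G => exists G1 G2, C1 G1 /\ C2 G2 /\ G = prod G1 G2.

(* Main.v *)
Require Import Defs.
From mathcomp Require Import all_boot.
From Stdlib Require Import Classical ClassicalEpsilon.
From mathcomp Require Import zify.
Set Implicit Arguments. Unset Strict Implicit. Unset Printing Implicit Defensive.

Lemma pw_spec G : pw_at_most G (pathwidth G).
Proof.
rewrite /pathwidth; case: ex_minnP => k hk _; move: hk; rewrite /pw_at_mostb.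
by case: excluded_middle_informative.
Qed.

Lemma pw_le G k : pw_at_most G k -> pathwidth G <= k.
Proof.
move=> h; rewrite /pathwidth; case: ex_minnP => m _ hmin; apply: hmin.
by rewrite /pw_at_mostb; case: excluded_middle_informative.
Qed.

Lemma pw_sub (H G : graph) (f : vtx H -> vtx G) : injective f ->
  (forall x y, adj H x y -> adj G (f x) (f y)) -> pathwidth H <= pathwidth G.
Proof.
move=> finj fe.
have [B [[hc [he hv]] hs]] := pw_spec G; apply: pw_le.
exists (map (fun X : {set vtx G} => f @^-1: X) B); split; first split.
- move=> v; have [X XB vX] := hc (f v); exists (f @^-1: X); first exact: map_f.
  by rewrite inE.
- split.
  + move=> u v uv; have [X XB /andP[uX vX]] := he _ _ (fe _ _ uv).
    by exists (f @^-1: X); [exact: map_f | rewrite !inE uX vX].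
  + move=> v i j l ij jl; rewrite size_map => lB.
    rewrite !(nth_map set0) ?(leq_ltn_trans ij (leq_ltn_trans jl lB)) ?(leq_ltn_trans jl lB) //.
    rewrite !inE; exact: hv.
- move=> X' /mapP [X XB ->].
  apply: leq_trans (hs X XB).
  rewrite -(card_imset _ finj); apply: subset_leq_card.
  by apply/subsetP => y /imsetP [x]; rewrite inE => + ->.
Qed.

Lemma ex_min_prop (P : nat -> Prop) : (exists n, P n) ->
  exists n, P n /\ forall m, m < n -> ~ P m.
Proof.
case=> n; elim/ltn_ind: n => n IH Pn.
case: (classic (exists m, m < n /\ P m)) => [[m [mn Pm]]|h]; first exact: IH mn Pm.
exists n; split => // m mn Pm; apply: h; by exists m.
Qed.

Section Conv.
Variables (G : graph) (B : seq {set vtx G}).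
Hypothesis hB : path_decomposition B.

Lemma pd_conv v i j l : i <= j -> j <= l ->
  v \in nth set0 B i -> v \in nth set0 B l -> v \in nth set0 B j.
Proof.
move=> ij jl vi vl; have [_ [_ hv]] := hB; apply: (hv v i j l) => //.
by case: ltnP vl => // h; rewrite nth_default // inE.
Qed.

Lemma path_meet x p i j l : path (adj G) x p -> x \in nth set0 B i ->
  last x p \in nth set0 B l -> i <= j -> j <= l ->
  exists2 w, w \in x :: p & w \in nth set0 B j.
Proof.
elim: p x i => [|z p IH] x i /=.
  move=> _ xi xl ij jl; exists x; first exact: mem_head.
  exact: pd_conv xi xl.
move=> /andP [xz pz] xi zl ij jl.
have [_ [he _]] := hB; have [X XB /andP [xX zX]] := he _ _ xz.
have eX := nth_index set0 XB.
case: (leqP (index X B) j) => kj.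
  have zk : z \in nth set0 B (index X B) by rewrite eX.
  have [w wp wj] := IH z (index X B) pz zk zl kj jl.
  by exists w => //; rewrite inE wp orbT.
exists x; first exact: mem_head.
by apply: (pd_conv (i := i) (l := index X B)) => //; [exact: ltnW | rewrite eX].
Qed.

Definition meets (S : pred (vtx G)) k := exists2 w, S w & w \in nth set0 B k.

Definition pconn (S : pred (vtx G)) := forall w1 w2, S w1 -> S w2 ->
  exists p, [/\ path (adj G) w1 p, last w1 p = w2 & all S p].

Lemma meets_conv S i j l : pconn S -> meets S i -> meets S l -> i <= j -> j <= l ->
  meets S j.
Proof.
move=> hS [w1 S1 i1] [w2 S2 l2] ij jl.
have [p [pp lp ap]] := hS _ _ S1 S2.
have l2' : last w1 p \in nth set0 B l by rewrite lp.
have [w wp wj] := path_meet pp i1 l2' ij jl.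
exists w => //; move: wp; rewrite inE => /orP [/eqP ->//|]; by move/(allP ap).
Qed.

Lemma core (J : Type) (T : J -> pred (vtx G)) (S : pred (vtx G)) t :
  (forall k, t < k -> ~ meets S k) ->
  (forall j, pconn (T j)) ->
  (forall j, exists2 w, S w & T j w) ->
  (t = 0 \/ forall j, exists2 k, t <= k & meets (T j) k) ->
  forall j, meets (T j) t.
Proof.
move=> hfin hconn hint halt j.
have [w Sw Tw] := hint j.
have [hc _] := hB; have [X XB wX] := hc w.
have eX := nth_index set0 XB.
have kt : index X B <= t.
  rewrite leqNgt; apply/negP => tk; apply: (hfin _ tk); exists w => //; by rewrite eX.
case: halt => [t0|h].
  by exists w => //; move: kt; rewrite t0 leqn0 => /eqP <-; rewrite eX.
have [k tk mk] := h j.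
apply: (meets_conv (hconn j) _ mk kt tk); exists w => //; by rewrite eX.
Qed.

Lemma helly (I J : Type) (R : I -> pred (vtx G)) (C : J -> pred (vtx G)) (i0 : I) :
  (forall i, pconn (R i)) -> (forall j, pconn (C j)) ->
  (forall i j, exists2 w, R i w & C j w) ->
  exists t, (forall j, meets (C j) t) \/ (forall i, meets (R i) t).
Proof.
move=> hR hC hRC.
pose fam (S : pred (vtx G)) := (exists i, S = R i) \/ (exists j, S = C j).
pose fin t := exists S, fam S /\ forall k, t < k -> ~ meets S k.
have : exists t, fin t.
  exists (size B), (R i0); split; first by left; exists i0.
  move=> k Bk [w _]; rewrite nth_default ?inE //; exact: ltnW.
case/ex_min_prop => t [[S [fS hS]] hmin].
exists t.
have halt : forall (K : Type) (T : K -> pred (vtx G)),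
    (forall j, fam (T j)) -> t = 0 \/ forall j, exists2 k, t <= k & meets (T j) k.
  move=> K T hT; case: t hmin hS => [|t] hmin hS; [by left|right] => j.
  apply: NNPP => hn; apply: (hmin t (ltnSn t)); exists (T j); split => // k tk mk.
  by apply: hn; exists k.
case: fS => [[i eS]|[j eS]]; rewrite eS in hS.
  left; apply: core hS hC (fun j => hRC i j) _.
  by apply: (halt _ C) => j; right; exists j.
right; apply: core hS hR _ _.
  by move=> i; have [w ??] := hRC i j; exists w.
by apply: (halt _ R) => i; left; exists i.
Qed.

End Conv.

Section LB.
Variables G1 G2 : graph.
Local Notation e1 := (adj G1).
Local Notation e2 := (adj G2).
Local Notation GG := (cartesian G1 G2).

Lemma row_path a v p : path e2 v p ->
  path (adj GG) (a, v) (map (pair a) p).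
Proof.
elim: p v => //= z p IH v /andP [vz pz]; rewrite IH // andbT.
by rewrite /= /cadj /= vz eqxx orbT.
Qed.

Lemma col_path v a p : path e1 a p ->
  path (adj GG) (a, v) (map (fun b => (b, v)) p).
Proof.
elim: p a => //= z p IH a /andP [az pz]; rewrite IH // andbT.
by rewrite /= /cadj /= az eqxx.
Qed.

Lemma csym1 : connect_sym e1. Proof. exact: sym_connect_sym (adj_sym G1). Qed.
Lemma csym2 : connect_sym e2. Proof. exact: sym_connect_sym (adj_sym G2). Qed.

Lemma cart_lb x1 x2 :
  minn #|[set y | connect e1 x1 y]| #|[set y | connect e2 x2 y]|
    <= (pathwidth GG).+1.
Proof.
have [B [hB hs]] := pw_spec GG.
pose I := {a : vtx G1 | connect e1 x1 a}.
pose J := {v : vtx G2 | connect e2 x2 v}.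
pose R (i : I) : pred (vtx GG) := fun w => (w.1 == sval i) && connect e2 x2 w.2.
pose C (j : J) : pred (vtx GG) := fun w => (w.2 == sval j) && connect e1 x1 w.1.
have i0 : I by exists x1; exact: connect0.
have hR : forall i, pconn (R i).
  move=> i [a1 v1] [a2 v2]; rewrite /R /= => /andP [/eqP -> c1] /andP [/eqP -> c2].
  have c12 : connect e2 v1 v2 by rewrite (connect_trans _ c2) // csym2.
  case/connectP: c12 => p pp lp.
  exists (map (pair (sval i)) p); split; first exact: row_path.
    by rewrite last_map -lp.
  apply/allP => w /mapP [v vp ->]; rewrite /= eqxx /=.
  apply: connect_trans c1 _; apply: (path_connect pp); by rewrite inE vp orbT.
have hC : forall j, pconn (C j).
  move=> j [a1 v1] [a2 v2]; rewrite /C /= => /andP [/eqP -> c1] /andP [/eqP -> c2].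
  have c12 : connect e1 a1 a2 by rewrite (connect_trans _ c2) // csym1.
  case/connectP: c12 => p pp lp.
  exists (map (fun b => (b, sval j)) p); split; first exact: col_path.
    by rewrite last_map -lp.
  apply/allP => w /mapP [b bp ->]; rewrite /= eqxx /=.
  apply: connect_trans c1 _; apply: (path_connect pp); by rewrite inE bp orbT.
have hRC : forall i j, exists2 w, R i w & C j w.
  move=> i j; exists (sval i, sval j); rewrite /R /C /= eqxx /=.
    exact: (svalP j).
  exact: (svalP i).
have [t ht] := helly hB i0 hR hC hRC.
have bagb : forall w, w \in nth set0 B t -> #|nth set0 B t| <= (pathwidth GG).+1.
  move=> w wt; apply: hs; apply: mem_nth; case: ltnP wt => // h.
  by rewrite nth_default // inE.
case: ht => [h|h].
  have j0 : J by exists x2; exact: connect0.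
  have [w0 _ w0t] := h j0.
  apply: leq_trans (geq_minr _ _) _; apply: leq_trans (bagb _ w0t).
  apply: leq_trans (leq_imset_card snd _); apply: subset_leq_card.
  apply/subsetP => v; rewrite inE => cv.
  have [w /andP [/eqP wv _] wt] := h (exist _ v cv).
  by apply/imsetP; exists w.
have [w0 _ w0t] := h i0.
apply: leq_trans (geq_minl _ _) _; apply: leq_trans (bagb _ w0t).
apply: leq_trans (leq_imset_card fst _); apply: subset_leq_card.
apply/subsetP => a; rewrite inE => ca.
have [w /andP [/eqP wa _] wt] := h (exist _ a ca).
by apply/imsetP; exists w.
Qed.

End LB.

Section UB.
Variables (G1 G2 : graph) (k c : nat) (B1 : seq {set vtx G1}).
Hypothesis hB1 : path_decomposition B1.
Hypothesis hs1 : forall X, X \in B1 -> #|X| <= k.+1.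
Hypothesis hc : max_comp G2 <= c.
Local Notation e := (adj G2).

Let csym : connect_sym e. Proof. exact: sym_connect_sym (adj_sym G2). Qed.
Let reps := enum (roots e).
Let s := size B1.
Let m := size reps.
Let Comp (q : nat) : {set vtx G2} := [set y | index (root e y) reps == q].
Let f (n : nat) : {set vtx G1 * vtx G2} := setX (nth set0 B1 (n %% s)) (Comp (n %/ s)).
Let bags := mkseq f (s * m).

Let memb n w : n < s * m -> (w \in nth set0 bags n) =
  (w.1 \in nth set0 B1 (n %% s)) && (index (root e w.2) reps == n %/ s).
Proof. by move=> nsm; rewrite nth_mkseq // /f; case: w => a v; rewrite in_setX inE. Qed.

Let memb0 n w : w \in nth set0 bags n -> n < s * m.
Proof. by case: ltnP => // h; rewrite nth_default ?inE // size_mkseq. Qed.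

Let rep_in y : index (root e y) reps < m.
Proof. by rewrite index_mem mem_enum; exact: roots_root. Qed.

Let idx X q : X \in B1 -> q < m ->
  let n := q * s + index X B1 in [/\ n < s * m, n %% s = index X B1 & n %/ s = q].
Proof.
move=> XB qm /=; have iS : index X B1 < s by rewrite index_mem.
have s0 : 0 < s by case: (s) iS.
split.
- apply: (@leq_trans (q.+1 * s)); first by rewrite mulSn; lia.
  by rewrite mulnC leq_mul2l qm orbT.
- by rewrite modnMDl modn_small.
- by rewrite divnMDl // divn_small // addn0.
Qed.

Let bag_at X y w : X \in B1 -> w.1 \in X -> root e w.2 = root e y ->
  exists2 Y, Y \in bags & w \in Y.
Proof.
move=> XB wX ry.
have [nsm nm nd] := idx XB (rep_in y).
exists (nth set0 bags (index (root e y) reps * s + index X B1)).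
  by apply: mem_nth; rewrite size_mkseq.
by rewrite memb // nm nd nth_index // wX ry eqxx.
Qed.

Lemma strong_ub_pd : pw_at_most (strong G1 G2) (k.+1 * c - 1).
Proof.
have [hcov [hedge hconv]] := hB1.
exists bags; split; first split.
- move=> [a v]; have [X XB aX] := hcov a; exact: (bag_at (y := v) XB).
- split.
  + move=> [a v] [b u]; rewrite /= /sadj /= => /andP [/andP [_ hab] hvu].
    have ruv : root e u = root e v.
      case/orP: hvu => [/eqP -> //|vu]; apply/esym/rootP => //; exact: connect1.
    have [X XB abX] : exists2 X, X \in B1 & (a \in X) && (b \in X).
      case/orP: hab => [/eqP <-|ab]; last exact: hedge.
      by have [X XB aX] := hcov a; exists X; rewrite ?aX.
    case/andP: abX => aX bX.
    have [nsm nm nd] := idx XB (rep_in v).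
    exists (nth set0 bags (index (root e v) reps * s + index X B1)).
      by apply: mem_nth; rewrite size_mkseq.
    by rewrite !memb //= nm nd nth_index // aX bX ruv eqxx.
  + move=> w i j l ij jl lB wi wl.
    have ism := memb0 wi; have lsm := memb0 wl.
    have jsm : j < s * m by apply: leq_ltn_trans jl lsm.
    move: wi wl; rewrite !memb // => /andP [wi /eqP qi] /andP [wl /eqP ql].
    have s0 : 0 < s by case: (s) ism.
    have qj : j %/ s = i %/ s.
      have li : l %/ s = i %/ s by rewrite -ql qi.
      apply/eqP; rewrite eqn_leq (leq_div2r _ ij) andbT -li leq_div2r //.
    rewrite qj -qi eqxx andbT.
    have ei := divn_eq i s; have ej := divn_eq j s; have el := divn_eq l s.
    rewrite qj in ej; rewrite -ql qi in el.
    apply: (pd_conv hB1 (i := i %% s) (l := l %% s)) => //; lia.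
- move=> Y /mapP [n]; rewrite mem_iota add0n => /andP [_ nsm] ->.
  rewrite /f cardsX.
  have h1 : #|nth set0 B1 (n %% s)| <= k.+1.
    have s0 : 0 < s by case: (s) nsm.
    by apply: hs1; apply: mem_nth; rewrite ltn_pmod.
  have h2 : #|Comp (n %/ s)| <= c.
    case: (set_0Vmem (Comp (n %/ s))) => [->|[y]]; first by rewrite cards0.
    rewrite inE => /eqP ey.
    apply: leq_trans hc; apply: leq_trans (leq_bigmax y).
    apply: subset_leq_card; apply/subsetP => z; rewrite !inE => /eqP ez.
    rewrite -root_connect //; apply/eqP.
    have rz : root e z \in reps by rewrite mem_enum; exact: roots_root.
    have ry : root e y \in reps by rewrite mem_enum; exact: roots_root.
    by rewrite -(nth_index y rz) -(nth_index y ry) ez ey.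
  have := leq_mul h1 h2; lia.
Qed.

End UB.

Lemma strong_ub G1 G2 k c : pathwidth G1 <= k -> max_comp G2 <= c ->
  pathwidth (strong G1 G2) <= k.+1 * c - 1.
Proof.
move=> hk hc; have [B [hB hs]] := pw_spec G1.
apply: pw_le; apply: (@strong_ub_pd _ _ _ _ B hB _ hc) => X XB.
exact: leq_trans (hs X XB) _.
Qed.

Lemma cart_le_strong G1 G2 : pathwidth (cartesian G1 G2) <= pathwidth (strong G1 G2).
Proof.
apply: (@pw_sub (cartesian G1 G2) (strong G1 G2) id) => // p q; case: p q => [a v] [b u]; rewrite /= /cadj /sadj /=.
case/orP => /andP [h /eqP e].
  subst u; rewrite h orbT eqxx /= andbT xpair_eqE eqxx andbT.
  by rewrite andbT; apply/eqP => e; move: h; rewrite e adj_irr.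
subst b; rewrite h orbT eqxx /= andbT xpair_eqE eqxx /=.
by rewrite andbT; apply/eqP => e; move: h; rewrite e adj_irr.
Qed.

Lemma strong_swap G1 G2 : pathwidth (strong G1 G2) <= pathwidth (strong G2 G1).
Proof.
apply: (@pw_sub (strong G1 G2) (strong G2 G1) (fun p : vtx G1 * vtx G2 => (p.2, p.1))).
  by move=> p q; case: p q => [a v] [b u] /= [-> ->].
move=> p q; case: p q => [a v] [b u]; rewrite /= /sadj /= !xpair_eqE.
case/andP => /andP [h1 h2] h3; rewrite h2 h3 andbT /=.
by rewrite andbT andbC.
Qed.

Lemma left_sub G1 G2 (v0 : vtx G2) : pathwidth G1 <= pathwidth (cartesian G1 G2).
Proof.
apply: (@pw_sub G1 (cartesian G1 G2) (fun a => (a, v0))); first by move=> a b [].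
by move=> a b ab; rewrite /= /cadj /= ab eqxx.
Qed.

Lemma right_sub G1 G2 (a0 : vtx G1) : pathwidth G2 <= pathwidth (cartesian G1 G2).
Proof.
apply: (@pw_sub G2 (cartesian G1 G2) (fun v => (a0, v))); first by move=> a b [].
by move=> a b ab; rewrite /= /cadj /= ab eqxx orbT.
Qed.

Lemma mono_ne C : monotone C -> exists G, C G /\ exists x : vtx G, True.
Proof.
case=> [[_ [G [CG hG]]] _]; exists G; split => //.
by case/card_gt0P: hG => x _; exists x.
Qed.

Lemma big_comp G n : ~ (max_comp G <= n) ->
  exists x, n < #|[set y | connect (adj G) x y]|.
Proof.
move=> h; apply: NNPP => hn; apply: h; apply/bigmax_leqP => x _.
by rewrite leqNgt; apply/negP => hx; apply: hn; exists x.
Qed.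

Lemma unb_comp C n : ~ bounded max_comp C ->
  exists G, C G /\ exists x, n < #|[set y | connect (adj G) x y]|.
Proof.
move=> h; apply: NNPP => hn; apply: h; exists n => G CG.
apply: NNPP => hG; apply: hn; exists G; split => //; exact: big_comp.
Qed.

Theorem mainTheorem14 (C1 C2 : graph -> Prop) :
  monotone C1 -> monotone C2 ->
  (bounded pathwidth (class_prod strong C1 C2) <->
     bounded pathwidth (class_prod cartesian C1 C2)) /\
  (bounded pathwidth (class_prod cartesian C1 C2) <->
     (bounded pathwidth C1 /\ bounded pathwidth C2 /\
      (bounded max_comp C1 \/ bounded max_comp C2))).
Proof.
move=> m1 m2.
have H12 : bounded pathwidth (class_prod strong C1 C2) ->
           bounded pathwidth (class_prod cartesian C1 C2).
  case=> b hb; exists b => _ [G1 [G2 [c1 [c2 ->]]]].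
  apply: leq_trans (cart_le_strong _ _) _; apply: hb; by exists G1, G2.
have H23 : bounded pathwidth (class_prod cartesian C1 C2) ->
     (bounded pathwidth C1 /\ bounded pathwidth C2 /\
      (bounded max_comp C1 \/ bounded max_comp C2)).
  case=> b hb; split; [|split].
  - exists b => G1 c1; have [G0 [c0 [v0 _]]] := mono_ne m2.
    apply: leq_trans (left_sub _ v0) _; apply: hb; by exists G1, G0.
  - exists b => G2 c2; have [G0 [c0 [a0 _]]] := mono_ne m1.
    apply: leq_trans (right_sub _ a0) _; apply: hb; by exists G0, G2.
  - apply: NNPP => hn.
    have [G1 [c1 [x1 h1]]] := unb_comp b.+1 (fun h => hn (or_introl h)).
    have [G2 [c2 [x2 h2]]] := unb_comp b.+1 (fun h => hn (or_intror h)).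
    have := cart_lb x1 x2.
    have : pathwidth (cartesian G1 G2) <= b by apply: hb; exists G1, G2.
    have : b.+1 < minn #|[set y | connect (adj G1) x1 y]|
                        #|[set y | connect (adj G2) x2 y]|.
      by rewrite leq_min h1 h2.
    lia.
have H31 : (bounded pathwidth C1 /\ bounded pathwidth C2 /\
      (bounded max_comp C1 \/ bounded max_comp C2)) ->
      bounded pathwidth (class_prod strong C1 C2).
  case=> [[b1 h1] [[b2 h2] [[c hc]|[c hc]]]].
    exists (b2.+1 * c - 1) => _ [G1 [G2 [c1 [c2 ->]]]].
    apply: leq_trans (strong_swap _ _) _.
    exact: strong_ub (h2 _ c2) (hc _ c1).
  exists (b1.+1 * c - 1) => _ [G1 [G2 [c1 [c2 ->]]]].
  exact: strong_ub (h1 _ c1) (hc _ c2).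
split; split; auto.
Qed.
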